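(* Let $\mathfrak{X}$ be a dual polar scheme of diameter $d$ on the vertex set $X$, with base vertex $u_0$, and let $e\ge 0$ be an integer. Let $(Y,w)$ be a positively weighted subset of $X$ which is a relative $2e$-design with respect to $u_0$, i.e. \[ \sum_{i=1}^p\frac{w(Y_{r_i})}{k_{r_i}}\sum_{x\in X_{r_i}}f(x)=\sum_{y\in Y}w(y)f(y)\quad\text{for every } f\in\mathrm{Hom}_0(X)+\mathrm{Hom}_1(X)+\cdots+\mathrm{Hom}_{2e}(X), \] where $\{r_1,\dots,r_p\}=\{r: Y\cap X_r\ne\emptyset\}$. Let $S=X_{r_1}\cup\cdots\cup X_{r_p}$. Then \[ |Y|\ge\dim\big(\mathrm{Hom}_0(S)+\mathrm{Hom}_1(S)+\cdots+\mathrm{Hom}_e(S)\big). \]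
   Context: Dual polar scheme: $V$ is a finite-dimensional vector space over a finite field with a non-degenerate alternating, Hermitian, or quadratic form of Witt index $d$; $X$ is the set of maximal totally isotropic subspaces, with distance $\partial(x,y)=d-\dim(x\cap y)$ (the distance in the dual polar graph), and relations $R_r=\{(x,y):\partial(x,y)=r\}$. Shells $X_r=\{x:\partial(u_0,x)=r\}$, $k_r=|X_r|$. A weighted subset is $Y\subseteq X$ with $w:Y\to\mathbb{R}_{>0}$; $Y_{r}=Y\cap X_r$, $w(Y_r)=\sum_{y\in Y_r}w(y)$. For $z\in X$, $f_z(x)=1$ if $\partial(u_0,z)+\partial(z,x)=\partial(u_0,x)$ and $0$ otherwise; $\mathrm{Hom}_j(X)=\mathrm{span}\{f_z: z\in X_j\}$ (with $\mathrm{Hom}_j(X)=0$ for $j>d$), and $\mathrm{Hom}_j(S)=\{f|_S: f\in\mathrm{Hom}_j(X)\}$. *)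

(* Defs.v *)
From HB Require Import structures.
From mathcomp Require Import all_boot all_order all_algebra.
Set Implicit Arguments. Unset Strict Implicit. Unset Printing Implicit Defensive.
Import Order.TTheory GRing.Theory Num.Theory.
Local Open Scope ring_scope.

(* A form on V = 'rV[F]_n (row vectors), given by a Gram matrix M:
   - AltForm M      : B(u,v) = u M v^T   (alternating bilinear)
   - HermForm s M   : B(u,v) = u M (v^s)^T  (Hermitian w.r.t. the involution s)
   - QuadForm M     : Q(v) = v M v^T      (quadratic form) *)
Inductive dpform (F : finFieldType) (n : nat) :=
| AltForm of 'M[F]_n
| HermForm of {rmorphism F -> F} & 'M[F]_n
| QuadForm of 'M[F]_n.

Section DualPolar.
Variables (F : finFieldType) (n : nat).

Definition quadval (M : 'M[F]_n) (v : 'rV[F]_n) : F := (v *m M *m v^T) 0 0.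

Definition nondeg_form (phi : dpform F n) : Prop :=
  match phi with
  | AltForm M => M^T = - M /\ (forall i, M i i = 0) /\ M \in unitmx
  | HermForm s M =>
      (forall x, s (s x) = x) /\ (exists x, s x != x) /\
      M^T = map_mx s M /\ M \in unitmx
  | QuadForm M =>
      (* non-singular: no nonzero singular vector in the radical of the polar form *)
      forall v : 'rV[F]_n, v != 0 -> quadval M v = 0 -> v *m (M + M^T) != 0
  end.

(* A subspace of V is represented by a matrix A whose row space it is. *)
Definition tiso (phi : dpform F n) (A : 'M[F]_n) : bool :=
  match phi with
  | AltForm M => A *m M *m A^T == 0
  | HermForm s M => A *m M *m (map_mx s A)^T == 0
  | QuadForm M => [forall v : 'rV[F]_n, (v <= A)%MS ==> (quadval M v == 0)]
  end.

Definition witt (phi : dpform F n) : nat := \max_(A : 'M[F]_n | tiso phi A) \rank A.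

(* vertex set X: maximal totally isotropic subspaces, each represented by its
   canonical matrix <<A>>%MS *)
Definition dpX (phi : dpform F n) : {set 'M[F]_n} :=
  [set A : 'M[F]_n | [&& (<<A>>%MS == A), tiso phi A &
     [forall B : 'M[F]_n, (tiso phi B && (A <= B)%MS) ==> (B <= A)%MS]]].

Definition dpdist (phi : dpform F n) (x y : 'M[F]_n) : nat :=
  (witt phi - \rank (x :&: y)%MS)%N.

Definition shell (phi : dpform F n) (u0 : 'M[F]_n) (r : nat) : {set 'M[F]_n} :=
  [set x in dpX phi | dpdist phi u0 x == r].

Variable R : realFieldType.

Definition fun_on := {ffun 'M[F]_n -> R^o}.

Definition fz (phi : dpform F n) (u0 z : 'M[F]_n) : fun_on :=
  [ffun x => if (x \in dpX phi) &&
                (dpdist phi u0 z + dpdist phi z x == dpdist phi u0 x)%N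
             then 1 else 0].

(* Hom_j(X) = span { f_z : z in X_j } (zero when X_j is empty, e.g. j > d) *)
Definition HomX (phi : dpform F n) (u0 : 'M[F]_n) (j : nat) : {vspace fun_on} :=
  <<[seq fz phi u0 z | z <- enum (shell phi u0 j)]>>%VS.

(* restriction to S, realised as the function vanishing outside S *)
Definition restr (S : {set 'M[F]_n}) (f : fun_on) : fun_on :=
  [ffun x => if x \in S then f x else 0].

(* Hom_j(S) = { f|_S : f in Hom_j(X) } = span of the restricted generators *)
Definition HomS (phi : dpform F n) (u0 : 'M[F]_n) (S : {set 'M[F]_n}) (j : nat)
  : {vspace fun_on} :=
  <<[seq restr S (fz phi u0 z) | z <- enum (shell phi u0 j)]>>%VS.

End DualPolar.

(* Main.v *)
Require Import Defs.
From HB Require Import structures.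
From mathcomp Require Import all_boot all_order all_algebra ring zify.
Set Implicit Arguments. Unset Strict Implicit. Unset Printing Implicit Defensive.
Import Order.TTheory GRing.Theory Num.Theory.
Local Open Scope ring_scope.

Section Geo.
Variables (F : finFieldType) (n : nat) (phi : dpform F n).
Hypothesis Hnd : nondeg_form phi.

Definition sg : {rmorphism F -> F} :=
  match phi with HermForm s _ => s | _ => idfun end.
Definition gN : 'M[F]_n :=
  match phi with AltForm M => M | HermForm _ M => M | QuadForm M => M + M^T end.
Definition G (v w : 'rV[F]_n) : F := (v *m gN *m (map_mx sg w)^T) 0 0.

Lemma sgK x : sg (sg x) = x.
Proof. by rewrite /sg; case: phi Hnd => // s M [H _]. Qed.

Lemma entryG m1 m2 (A : 'M[F]_(m1, n)) (B : 'M[F]_(m2, n)) i j :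
  (A *m gN *m (map_mx sg B)^T) i j = G (row i A) (row j B).
Proof.
rewrite /G -row_mul map_row tr_row -mulmxA.
rewrite -row_mul. rewrite colE mulmxA -colE !mxE.
by apply: eq_bigr => k _; rewrite !mxE.
Qed.

Lemma G_mul m1 m2 (A : 'M[F]_(m1,n)) (B : 'M[F]_(m2,n)) a b :
  G (a *m A) (b *m B) = (a *m (A *m gN *m (map_mx sg B)^T) *m (map_mx sg b)^T) 0 0.
Proof. by rewrite /G map_mxM trmx_mul !mulmxA. Qed.

Lemma orthoP m1 m2 (A : 'M[F]_(m1,n)) (B : 'M[F]_(m2,n)) :
  reflect (forall v w, (v <= A)%MS -> (w <= B)%MS -> G v w = 0)
          (A *m gN *m (map_mx sg B)^T == 0).
Proof.
apply: (iffP idP).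
  move/eqP=> H v w /submxP[a ->] /submxP[b ->].
  by rewrite G_mul H mulmx0 mul0mx mxE.
move=> H; apply/eqP/matrixP => i j; rewrite entryG mxE; apply: H; exact: row_sub.
Qed.

Lemma GDl v1 v2 w : G (v1 + v2) w = G v1 w + G v2 w.
Proof. by rewrite /G !mulmxDl mxE. Qed.
Lemma GDr v w1 w2 : G v (w1 + w2) = G v w1 + G v w2.
Proof. by rewrite /G map_mxD linearD /= mulmxDr mxE. Qed.
Lemma GZl c v w : G (c *: v) w = c * G v w.
Proof. by rewrite /G -!scalemxAl mxE. Qed.
Lemma GZr c v w : G v (c *: w) = sg c * G v w.
Proof. by rewrite /G map_mxZ linearZ /= -scalemxAr mxE. Qed.

Lemma map_idfun m1 m2 (A : 'M[F]_(m1, m2)) : map_mx (idfun : {rmorphism F -> F}) A = A.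
Proof. by apply/matrixP => i j; rewrite mxE. Qed.

Lemma scal11 (P : 'M[F]_1) : P^T 0 0 = P 0 0.
Proof. by rewrite mxE. Qed.

Lemma Gsym0 v w : G v w = 0 -> G w v = 0.
Proof.
rewrite /G /gN /sg; case: phi Hnd => [M|s M|M] /=.
- rewrite !map_idfun => -[HT _] H.
  rewrite -scal11 !trmx_mul trmxK HT.
  by rewrite mulNmx mulmxN mulmxA mxE H oppr0.
- move=> [sK [_ [HT _]]] H.
  have := congr1 s H; rewrite rmorph0 => <-.
  rewrite -scal11 !trmx_mul trmxK HT.
  have -> : forall X : 'M_1, s (X 0 0) = (map_mx s X) 0 0 by move=> X; rewrite mxE.
  rewrite !map_mxM mulmxA; congr ((_ *m _) 0 0).
  by apply/matrixP => i j; rewrite !mxE sK.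
- move=> _; rewrite !map_idfun => H.
  by rewrite -scal11 !trmx_mul trmxK linearD /= trmxK addrC mulmxA.
Qed.


Lemma trE (M : 'M[F]_n) (v w : 'rV[F]_n) : (w *m M *m v^T) 0 0 = (v *m M^T *m w^T) 0 0.
Proof. by rewrite -scal11 !trmx_mul trmxK mulmxA. Qed.

Lemma quadD (M : 'M[F]_n) (v w : 'rV[F]_n) : quadval M (v + w) =
  quadval M v + quadval M w + (v *m (M + M^T) *m w^T) 0 0.
Proof.
have e00D (X Y : 'M[F]_1) : (X + Y) 0 0 = X 0 0 + Y 0 0 by rewrite mxE.
rewrite /quadval linearD /= !mulmxDl !mulmxDr !e00D.
rewrite mulmxDl e00D [(w *m M *m v^T) 0 0]trE. ring. Qed.

Lemma quadZ (M : 'M[F]_n) c (v : 'rV[F]_n) : quadval M (c *: v) = c * c * quadval M v.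
Proof. by rewrite /quadval -!scalemxAl linearZ /= -scalemxAr !mxE mulrA. Qed.

Definition sing (v : 'rV[F]_n) : bool :=
  match phi with QuadForm M => quadval M v == 0 | _ => G v v == 0 end.

Definition Pti m (A : 'M[F]_(m, n)) : Prop :=
  (forall v, (v <= A)%MS -> sing v) /\
  (forall v w, (v <= A)%MS -> (w <= A)%MS -> G v w = 0).

Lemma sing_G v : sing v -> G v v = 0.
Proof.
rewrite /sing /G /gN /sg; case: phi => [M|s M|M] /=; try by move/eqP.
rewrite map_idfun => /eqP Hq.
have := quadD M v v; rewrite Hq.
have -> : v + v = 2%:R *: v by rewrite scaler_nat mulr2n.
by rewrite quadZ Hq mulr0 !add0r => <-.
Qed.

Lemma e00D (X Y : 'M[F]_1) : (X + Y) 0 0 = X 0 0 + Y 0 0.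
Proof. by rewrite mxE. Qed.

Lemma singD a b : sing a -> sing b -> G a b = 0 -> sing (a + b).
Proof.
move=> Ha Hb Hab; have Hba := Gsym0 Hab.
have Ga := sing_G Ha; have Gb := sing_G Hb; move: Ga Gb Ha Hb Hab Hba.
rewrite /sing /G /gN /sg; case: phi => [M|s M|M] /=.
- rewrite !map_idfun => Ha Hb _ _ Hab Hba.
  by rewrite linearD /= mulmxDr !mulmxDl !e00D Ha Hb Hab Hba !addr0.
- move=> Ha Hb _ _ Hab Hba.
  by rewrite map_mxD linearD /= mulmxDr !mulmxDl !e00D Ha Hb Hab Hba !addr0.
- rewrite !map_idfun => _ _ /eqP Ha /eqP Hb Hab _.
  by rewrite quadD Ha Hb Hab !addr0.
Qed.

Lemma singZ c v : sing v -> sing (c *: v).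
Proof.
move=> H; have GH := sing_G H; move: GH H; rewrite /sing; case: phi => [M|s M|M] /=.
- by move=> Hv _; rewrite GZl GZr Hv !mulr0.
- by move=> Hv _; rewrite GZl GZr Hv !mulr0.
- by move=> _ /eqP Hq; rewrite quadZ Hq mulr0.
Qed.

Lemma Pti_sub m1 m2 (A : 'M[F]_(m1, n)) (B : 'M[F]_(m2, n)) :
  (B <= A)%MS -> Pti A -> Pti B.
Proof.
move=> sBA [H1 H2]; split=> [v Hv|v w Hv Hw].
  exact: H1 (submx_trans Hv sBA).
exact: H2 (submx_trans Hv sBA) (submx_trans Hw sBA).
Qed.

Lemma Pti_add m1 m2 (A : 'M[F]_(m1, n)) (B : 'M[F]_(m2, n)) :
  Pti A -> Pti B -> (forall a b, (a <= A)%MS -> (b <= B)%MS -> G a b = 0) ->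
  Pti (A + B)%MS.
Proof.
move=> [A1 A2] [B1 B2] HAB.
have Gab : forall v w, (v <= A + B)%MS -> (w <= A + B)%MS -> G v w = 0.
  move=> v w /sub_addsmxP[[a b] ->] /sub_addsmxP[[c d] ->] /=.
  rewrite !GDl !GDr (A2 (a *m A) (c *m A)) ?submxMl // (HAB (a *m A) (d *m B)) ?submxMl //.
  rewrite (Gsym0 (HAB (c *m A) (b *m B) _ _)) ?submxMl // (B2 (b *m B)) ?submxMl //.
  by rewrite !addr0.
split=> // v Hv; move: Hv (Hv) => /sub_addsmxP[[a b] ->] /= Hv.
apply: singD; [exact: A1 (submxMl _ _)|exact: B1 (submxMl _ _)|].
by apply: HAB; apply: submxMl.
Qed.

Lemma Pti_row (v : 'rV[F]_n) : sing v -> Pti v.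
Proof.
move=> Hv; split=> [w /sub_rVP[a ->]|w1 w2 /sub_rVP[a ->] /sub_rVP[b ->]].
  exact: singZ.
by rewrite GZl GZr sing_G // !mulr0.
Qed.

Lemma tisoP (A : 'M[F]_n) : tiso phi A <-> Pti A.
Proof.
have gen : (A *m gN *m (map_mx sg A)^T == 0) ->
    (forall v, (v <= A)%MS -> sing v) -> Pti A.
  by move/orthoP=> H1 H2; split.
case E : phi => [M|s M|M].
- have -> : tiso (AltForm M) A = (A *m gN *m (map_mx sg A)^T == 0).
    by rewrite /gN /sg E map_idfun.
  split=> [H|[_ H]]; last exact/orthoP.
  apply: gen => // v Hv; rewrite /sing E; apply/eqP.
  by move/orthoP: H; apply.
- have -> : tiso (HermForm s M) A = (A *m gN *m (map_mx sg A)^T == 0).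
    by rewrite /gN /sg E.
  split=> [H|[_ H]]; last exact/orthoP.
  apply: gen => // v Hv; rewrite /sing E; apply/eqP.
  by move/orthoP: H; apply.
- rewrite /tiso; split.
    move/forallP=> H.
    have Hs : forall v, (v <= A)%MS -> sing v.
      by move=> v Hv; rewrite /sing E; move/implyP: (H v); apply.
    split=> // v w Hv Hw.
    have := quadD M v w.
    move/implyP: (H (v + w)) => /(_ (addmx_sub Hv Hw)) /eqP ->.
    move/implyP: (H v) => /(_ Hv) /eqP ->.
    move/implyP: (H w) => /(_ Hw) /eqP ->.
    rewrite /G /gN /sg E map_idfun !add0r => <- //.
  move=> [H _]; apply/forallP => v; apply/implyP => Hv.
  by move: (H v Hv); rewrite /sing E.
Qed.

Lemma sing0 : sing 0.
Proof.
by rewrite /sing /G; case: phi => * //=; rewrite /quadval ?mul0mx ?mxE.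
Qed.

Lemma Pti0 m : Pti (0 : 'M[F]_(m, n)).
Proof.
split=> [v|v w] /submx0null ->; first exact: sing0.
by move=> _; rewrite /G !mul0mx mxE.
Qed.

Lemma dpXP x : x \in dpX phi ->
  [/\ <<x>>%MS = x, Pti x & forall B : 'M[F]_n, Pti B -> (x <= B)%MS -> (B <= x)%MS].
Proof.
rewrite inE => /and3P[/eqP H1 /tisoP H2 /forallP H3]; split=> // B HB xB.
by move/implyP: (H3 B); apply; rewrite xB andbT; apply/tisoP.
Qed.

Lemma max_perp x v : x \in dpX phi -> sing v ->
  (forall a, (a <= x)%MS -> G a v = 0) -> (v <= x)%MS.
Proof.
move=> /dpXP[_ Px Mx] Hv Hp.
have P2 : Pti (x + v)%MS.
  apply: Pti_add => //; first exact: Pti_row.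
  by move=> a b Ha /sub_rVP[c ->]; rewrite GZr Hp // mulr0.
exact: submx_trans (addsmxSr _ _) (Mx _ P2 (addsmxSl _ _)).
Qed.

Lemma tiso_rank (A : 'M[F]_n) : Pti A -> (\rank A <= witt phi)%N.
Proof. by move/tisoP=> H; apply: (leq_bigmax_cond (F := fun A => \rank A)). Qed.

Lemma witt_ex : exists2 W : 'M[F]_n, Pti W & \rank W = witt phi.
Proof.
have : (0 < #|[pred A : 'M[F]_n | tiso phi A]|)%N.
  apply/card_gt0P; exists 0; rewrite inE; apply/tisoP; exact: Pti0.
move/(eq_bigmax_cond (fun A : 'M[F]_n => \rank A)) => [W HW E].
by exists W; [apply/tisoP; rewrite inE in HW|rewrite /witt E].
Qed.

Definition perpm m (A : 'M[F]_(m, n)) : 'M[F]_n := kermx (map_mx sg (A *m gN)^T).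

Lemma map_sgK m1 m2 (X : 'M[F]_(m1, m2)) : map_mx sg (map_mx sg X) = X.
Proof. by apply/matrixP => i j; rewrite !mxE sgK. Qed.

Lemma sub_perp m1 m2 (A : 'M[F]_(m1,n)) (B : 'M[F]_(m2,n)) :
  (B <= perpm A)%MS = (A *m gN *m (map_mx sg B)^T == 0).
Proof.
rewrite sub_kermx -(map_mx_eq0 sg) map_mxM map_sgK -trmx_eq0 trmx_mul trmxK.
by [].
Qed.

Lemma perpP m1 m2 (A : 'M[F]_(m1,n)) (B : 'M[F]_(m2,n)) :
  reflect (forall v w, (v <= A)%MS -> (w <= B)%MS -> G v w = 0) (B <= perpm A)%MS.
Proof. by rewrite sub_perp; apply: orthoP. Qed.

Lemma kerlem m1 m2 m3 (A : 'M[F]_(m1,n)) (B : 'M[F]_(m2,n)) (D : 'M[F]_(m3,n)) :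
  (D <= A)%MS -> (forall d b, (d <= D)%MS -> (b <= B)%MS -> G d b = 0) ->
  (\rank B + \rank D <= \rank (B :&: perpm A) + \rank A)%N.
Proof.
move=> DA HD.
have E1 := mxrank_mul_ker B (map_mx sg (A *m gN)^T).
have E2 := mxrank_mul_ker A (gN *m (map_mx sg B)^T).
have E3 : \rank (B *m map_mx sg (A *m gN)^T) = \rank (A *m (gN *m (map_mx sg B)^T)).
  rewrite -(mxrank_map sg) map_mxM map_sgK -mxrank_tr trmx_mul trmxK.
  by rewrite mulmxA.
have E4 : (D <= A :&: kermx (gN *m (map_mx sg B)^T))%MS.
  rewrite sub_capmx DA sub_kermx mulmxA; exact/orthoP.
have E5 := mxrankS E4; rewrite /perpm -E1 -E2 E3.
move: E5; move: (\rank (A *m _)) (\rank (A :&: _)) (\rank (B :&: _)) => x y z.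
by move=> H; rewrite (addnC x z) [(z + (x + y))%N]addnA leq_add2l.
Qed.

Lemma rank_X x : x \in dpX phi -> \rank x = witt phi.
Proof.
move=> Xx; have [_ Px _] := dpXP Xx.
apply/eqP; rewrite eqn_leq tiso_rank //=.
have [W PW <-] := witt_ex.
have KD : (W :&: perpm x <= W :&: x)%MS.
  rewrite sub_capmx capmxSl /=; apply/row_subP => i.
  apply: max_perp => //.
    by case: PW => H _; apply: H; exact: submx_trans (row_sub _ _) (capmxSl _ _).
  move=> a Ha; move/perpP: (capmxSr W (perpm x)); apply => //.
  exact: row_sub.
have := kerlem (capmxSr W x) (D := (W :&: x)%MS) (B := W) _.
move=> /(_ _) H.
have {}H : (\rank W + \rank (W :&: x) <= \rank (W :&: perpm x) + \rank x)%N.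
  apply: H => d b Hd Hb; case: PW => _ H2; apply: H2 => //.
  exact: submx_trans Hd (capmxSl _ _).
have H2 := mxrankS KD.
move: H H2; move: (\rank W) (\rank x) (\rank (W :&: x)) (\rank (W :&: perpm x)).
move=> a b c e H1 H2.
have : (a + c <= c + b)%N by apply: leq_trans H1 _; rewrite leq_add2r.
by rewrite addnC leq_add2l.
Qed.

Lemma dist_le (x y : 'M[F]_n) : x \in dpX phi -> (\rank (x :&: y) <= witt phi)%N.
Proof. by move=> Xx; rewrite -(rank_X Xx) mxrankS ?capmxSl. Qed.

Lemma geo_core (u z x : 'M[F]_n) : z \in dpX phi ->
  (\rank (u :&: z) + \rank (z :&: x) <= witt phi + \rank (u :&: x)
     ?= iff (u :&: x <= z)%MS && (z <= (u :&: z) + (z :&: x))%MS)%N.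
Proof.
move=> Xz; rewrite -(mxrank_sum_cap (u :&: z)%MS (z :&: x)%MS) -(rank_X Xz) andbC.
apply: leqif_add.
  by apply: mxrank_leqif_sup; rewrite addsmx_sub capmxSr capmxSl.
have S1 : ((u :&: z) :&: (z :&: x) <= u :&: x)%MS.
  rewrite sub_capmx; apply/andP; split.
    exact: submx_trans (capmxSl _ _) (capmxSl _ _).
  exact: submx_trans (capmxSr _ _) (capmxSr _ _).
have := mxrank_leqif_sup S1.
suff -> : (u :&: x <= (u :&: z) :&: (z :&: x))%MS = (u :&: x <= z)%MS by [].
apply/idP/idP => H.
  exact: submx_trans H (submx_trans (capmxSl _ _) (capmxSr _ _)).
rewrite !sub_capmx H capmxSl capmxSr //.
Qed.

Lemma dpdistE (x y : 'M[F]_n) : dpdist phi x y = (witt phi - \rank (x :&: y))%N.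
Proof. by []. Qed.

Lemma natgeo (d a b c : nat) : (c <= d)%N -> (b <= d)%N -> (a <= d)%N ->
  (a + b <= d + c)%N -> (((d - a) + (d - b))%N == (d - c)%N) = ((a + b)%N == (d + c)%N).
Proof. move=> *; apply/eqP/eqP; lia. Qed.

Lemma natleq (d a b c : nat) : (c <= d)%N -> (b <= d)%N -> (a <= d)%N ->
  (a + b <= d + c)%N -> ((d - c) <= (d - a) + (d - b))%N.
Proof. move=> *; lia. Qed.

Lemma natZ (a b c e f d : nat) : (d + f <= c + e)%N -> (a + b = e + c)%N -> (b <= f)%N -> (d <= a)%N.
Proof. move=> *; lia. Qed.

Lemma geoP (u z x : 'M[F]_n) : u \in dpX phi -> z \in dpX phi -> x \in dpX phi ->
  (dpdist phi u z + dpdist phi z x == dpdist phi u x) =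
  (u :&: x <= z)%MS && (z <= (u :&: z) + (z :&: x))%MS.
Proof.
move=> Xu Xz Xx; have [H1 <-] := geo_core u x Xz.
have := dist_le z Xu; have := dist_le x Xz; have := dist_le x Xu.
rewrite !dpdistE.
move=> Hc Hb Ha; exact: natgeo.
Qed.

Lemma triangle (u z x : 'M[F]_n) : u \in dpX phi -> z \in dpX phi -> x \in dpX phi ->
  (dpdist phi u x <= dpdist phi u z + dpdist phi z x)%N.
Proof.
move=> Xu Xz Xx; have [H1 _] := geo_core u x Xz.
have := dist_le z Xu; have := dist_le x Xz; have := dist_le x Xu.
rewrite !dpdistE => Hc Hb Ha; exact: natleq.
Qed.

Definition geo (u z x : 'M[F]_n) := (dpdist phi u z + dpdist phi z x == dpdist phi u x)%N.

Lemma geo_trans u z z3 x : u \in dpX phi -> z \in dpX phi -> z3 \in dpX phi ->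
  x \in dpX phi -> geo u z z3 -> geo u z3 x -> geo u z x.
Proof.
move=> Xu Xz X3 Xx /eqP H1 /eqP H2; rewrite /geo eqn_leq triangle // andbT.
rewrite -H2 -H1 -addnA leq_add2l; exact: triangle.
Qed.

Lemma eq_rank_sub m1 m2 (A : 'M[F]_(m1, n)) (B : 'M[F]_(m2, n)) :
  (A <= B)%MS -> (\rank B <= \rank A)%N -> (B <= A)%MS.
Proof.
move=> sAB le; have [_ <-] := mxrank_leqif_sup sAB.
by rewrite eqn_leq mxrankS.
Qed.

Lemma capG m1 m2 (X : 'M[F]_(m1, n)) (Y : 'M[F]_(m2, n)) : (X :&: <<Y>> :=: X :&: Y)%MS.
Proof.
apply/eqmxP; rewrite !sub_capmx !capmxSl /= genmxE.
by rewrite (submx_trans (capmxSr _ _)) ?genmxE // capmxSr.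
Qed.

Lemma Gcap m1 m2 (X : 'M[F]_(m1, n)) (Y : 'M[F]_(m2, n)) : (<<Y>> :&: X :=: Y :&: X)%MS.
Proof.
apply/eqmxP; rewrite !sub_capmx !capmxSr /= !andbT genmxE.
by rewrite (submx_trans (capmxSl _ _)) ?genmxE // capmxSl.
Qed.

Section Mid.
Variables u z z' x : 'M[F]_n.
Hypotheses (Xu : u \in dpX phi) (Xz : z \in dpX phi) (Xz' : z' \in dpX phi) (Xx : x \in dpX phi).
Hypotheses (Gz : geo u z x) (Gz' : geo u z' x).

Let A := ((u :&: z) :&: (u :&: z'))%MS.
Let C := (x :&: perpm A)%MS.
Let Z := (A + C)%MS.

Lemma uxA : (u :&: x <= A)%MS.
Proof using Hnd Xu Xz Xz' Xx Gz Gz'.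
move: Gz Gz'; rewrite /geo !geoP // => /andP[c1 _] /andP[c1' _].
by rewrite !sub_capmx capmxSl c1 c1'.
Qed.

Lemma Au : (A <= u)%MS.
Proof using Hnd Xu Xz Xz' Xx Gz Gz'. exact: submx_trans (capmxSl _ _) (capmxSl _ _). Qed.

Lemma PZ : Pti Z.
Proof using Hnd Xu Xz Xz' Xx Gz Gz'.
have [_ Pu _] := dpXP Xu; have [_ Px _] := dpXP Xx.
apply: Pti_add.
- exact: Pti_sub Au Pu.
- exact: Pti_sub (capmxSl _ _) Px.
- by move=> a c Ha Hc; move/perpP: (capmxSr x (perpm A)); apply.
Qed.

Lemma rankZ : \rank Z = witt phi.
Proof using Hnd Xu Xz Xz' Xx Gz Gz'.
apply/eqP; rewrite eqn_leq (tiso_rank PZ) /=.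
have [_ Px _] := dpXP Xx.
have K := @kerlem _ _ _ A x (A :&: x)%MS (capmxSl _ _).
have {K}K : (\rank x + \rank (A :&: x) <= \rank C + \rank A)%N.
  apply: K => d b Hd Hb; case: Px => _ H; apply: H => //.
  exact: submx_trans Hd (capmxSr _ _).
have E := mxrank_sum_cap A C.
have S : (\rank (A :&: C) <= \rank (A :&: x))%N.
  by apply: mxrankS; rewrite sub_capmx capmxSl /= (submx_trans (capmxSr _ _) (capmxSl _ _)).
rewrite (rank_X Xx) in K.
move: K E S; rewrite /Z.
move: (\rank (A + C)) (\rank (A :&: C)) (\rank C) (\rank A) (\rank (A :&: x)) (witt phi).
move=> a b c e f d K E S; exact: natZ K E S.
Qed.

Lemma XZ : <<Z>>%MS \in dpX phi.
Proof using Hnd Xu Xz Xz' Xx Gz Gz'.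
rewrite inE genmx_id eqxx /=; apply/andP; split.
  by apply/tisoP; apply: Pti_sub PZ; rewrite genmxE.
apply/forallP => B; apply/implyP => /andP[/tisoP PB sZB].
by apply: eq_rank_sub sZB _; rewrite genmxE rankZ tiso_rank.
Qed.

Lemma uZ : (u :&: <<Z>> :=: A)%MS.
Proof using Hnd Xu Xz Xz' Xx Gz Gz'.
apply: eqmx_trans (capG u Z) _; apply/eqmxP/andP; split.
  rewrite capmxC /Z -(matrix_modl C Au) addsmx_sub submx_refl /=.
  apply: submx_trans uxA; rewrite sub_capmx capmxSr /=.
  exact: submx_trans (capmxSl _ _) (capmxSl _ _).
by rewrite sub_capmx Au addsmxSl.
Qed.

Lemma distZ : dpdist phi u <<Z>>%MS = (witt phi - \rank A)%N.
Proof using Hnd Xu Xz Xz' Xx Gz Gz'. by rewrite dpdistE uZ. Qed.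

Lemma geo_yZ y : y \in dpX phi -> (A <= u :&: y)%MS -> geo u y x -> geo u y <<Z>>%MS.
Proof using Hnd Xu Xz Xz' Xx Gz Gz'.
move=> Xy Ay; rewrite /geo !geoP // ?XZ // => /andP[_ c2].
rewrite uZ (submx_trans Ay (capmxSr _ _)) /=.
apply: submx_trans c2 _; apply: addsmxS => //; rewrite capG sub_capmx capmxSl /=.
apply: submx_trans (addsmxSr A C); rewrite sub_capmx capmxSr /=.
apply/perpP => v w Hv Hw; have [_ Py _] := dpXP Xy; case: Py => _ H; apply: H.
  exact: submx_trans Hv (submx_trans Ay (capmxSr _ _)).
exact: submx_trans Hw (capmxSl _ _).
Qed.

Lemma geo_zZ : geo u z <<Z>>%MS.
Proof using Hnd Xu Xz Xz' Xx Gz Gz'. by apply: geo_yZ => //; apply: capmxSl. Qed.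

Lemma geo_z'Z : geo u z' <<Z>>%MS.
Proof using Hnd Xu Xz Xz' Xx Gz Gz'. by apply: geo_yZ => //; apply: capmxSr. Qed.

Lemma geo_Zx : geo u <<Z>>%MS x.
Proof using Hnd Xu Xz Xz' Xx Gz Gz'.
rewrite /geo geoP // ?XZ //; apply/andP; split.
  by rewrite genmxE; apply: submx_trans uxA (addsmxSl _ _).
rewrite genmxE addsmx_sub; apply/andP; split.
  by apply: submx_trans (addsmxSl _ _); rewrite uZ.
apply: submx_trans (addsmxSr _ _); rewrite Gcap sub_capmx addsmxSr.
exact: capmxSl.
Qed.

Lemma uniq_mid z3 : z3 \in dpX phi -> dpdist phi u z3 = (witt phi - \rank A)%N ->
  geo u z z3 -> geo u z' z3 -> geo u z3 x -> z3 = <<Z>>%MS.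
Proof using Hnd Xu Xz Xz' Xx Gz Gz'.
move=> X3 D3; rewrite /geo !geoP // => /andP[c1 _] /andP[c1' _] /andP[_ c2].
have s1 : (u :&: z3 <= A)%MS by rewrite !sub_capmx capmxSl c1 c1'.
have s2 : (A <= u :&: z3)%MS.
  apply: eq_rank_sub s1 _.
  move: D3; rewrite dpdistE.
  have := dist_le z3 Xu; have := mxrankS Au; rewrite (rank_X Xu).
  move: (\rank A) (\rank (u :&: z3)) (witt phi) => a b d; move=> *; lia.
have s3 : (z3 <= Z)%MS.
  apply: submx_trans c2 _; apply: addsmxS; first exact: s1.
  rewrite sub_capmx capmxSr /=; apply/perpP => v w Hv Hw.
  have [_ P3 _] := dpXP X3; case: P3 => _ H; apply: H.
    exact: submx_trans Hv (submx_trans s2 (capmxSr _ _)).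
  exact: submx_trans Hw (capmxSl _ _).
have s4 : (Z <= z3)%MS by apply: eq_rank_sub s3 _; rewrite rankZ (rank_X X3).
have [E3 _ _] := dpXP X3; rewrite -E3; apply: eq_genmx.
by apply/eqmxP; rewrite s3 s4.
Qed.

End Mid.

End Geo.

Section Fun.
Variables (F : finFieldType) (n : nat) (phi : dpform F n) (R : realFieldType).
Hypothesis Hnd : nondeg_form phi.

Local Notation fun_on := (fun_on F n R).
Local Notation fz := (fz R phi).

Definition mulf (f g : fun_on) : fun_on := [ffun x => f x * g x].

Lemma fzE u z x : fz u z x = if (x \in dpX phi) && geo phi u z x then 1 else 0.
Proof. by rewrite ffunE. Qed.

Lemma prod_fz u z z' : u \in dpX phi -> z \in dpX phi -> z' \in dpX phi ->
  mulf (fz u z) (fz u z') =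
  \sum_(z3 in [set z3 in shell phi u (witt phi - \rank ((u :&: z) :&: (u :&: z'))%MS) | geo phi u z z3 && geo phi u z' z3])
     fz u z3.
Proof.
move=> Xu Xz Xz'; apply/ffunP => x; rewrite ffunE sum_ffunE !fzE.
case Xx: (x \in dpX phi) => /=; last first.
  by rewrite mulr0 big1 // => z3 _; rewrite fzE Xx.
case: (boolP (geo phi u z x && geo phi u z' x)) => [/andP[g1 g2]|ng].
  rewrite g1 g2 mulr1.
  have XZ := XZ Hnd Xu Xz Xz' Xx g1 g2.
  rewrite (bigD1 <<((u :&: z :&: (u :&: z')) + (x :&: perpm phi (u :&: z :&: (u :&: z'))))%MS>>%MS) /=; last first.
    rewrite inE /shell inE; apply/and3P; split.
    - by apply/andP; split; [exact: XZ|apply/eqP; exact: (distZ Hnd Xu Xz Xz' Xx g1 g2)].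
    - exact: (geo_zZ Hnd Xu Xz Xz' Xx g1 g2).
    - exact: (geo_z'Z Hnd Xu Xz Xz' Xx g1 g2).
  rewrite fzE Xx /= ifT; last exact: (geo_Zx Hnd Xu Xz Xz' Xx g1 g2).
  rewrite big1 ?addr0 // => z3.
  rewrite inE /shell inE => /andP[/andP[/andP[X3 /eqP D3] /andP[h1 h2]] ne].
  rewrite fzE Xx /=; case: ifP => // h3.
  by move: ne; rewrite (uniq_mid Hnd Xu Xz Xz' Xx g1 g2 X3 D3 h1 h2 h3) eqxx.
have -> : (if geo phi u z x then 1 else 0) * (if geo phi u z' x then 1 else 0) = 0 :> R.
  move: ng => ng'; case: ifP => g1; case: ifP => g2; rewrite ?mulr0 ?mul0r //.
  by move: ng'; rewrite g1 g2.
apply/esym/big1 => z3; rewrite inE /shell inE => /andP[/andP[X3 _] /andP[h1 h2]].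
rewrite fzE Xx /=; case: ifP => // h3; move: ng.
by rewrite (geo_trans Hnd Xu Xz X3 Xx h1 h3) (geo_trans Hnd Xu Xz' X3 Xx h2 h3).
Qed.


Lemma fz_HomX u z j : z \in shell phi u j -> fz u z \in HomX R phi u j.
Proof. by move=> Hz; apply: memv_span; apply: map_f; rewrite mem_enum. Qed.

Lemma HomX_sum u j k : (j <= k)%N -> (HomX R phi u j <= \sum_(i < k.+1) HomX R phi u i)%VS.
Proof.
move=> jk; have jk' : (j < k.+1)%N by rewrite ltnS.
exact: (sumv_sup (Ordinal jk')).
Qed.

Lemma shellP u z j : z \in shell phi u j -> z \in dpX phi /\ dpdist phi u z = j.
Proof. by rewrite /shell in_set => /andP[? /eqP]. Qed.

Lemma natm (d a b c i j e : nat) : (a + b <= d + c)%N -> i = (d - a)%N -> j = (d - b)%N ->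
  (a <= d)%N -> (b <= d)%N -> (i <= e)%N -> (j <= e)%N -> (d - c <= 2 * e)%N.
Proof. move=> *; lia. Qed.

Lemma prod_in u e z z' i j : u \in dpX phi -> z \in shell phi u i -> z' \in shell phi u j ->
  (i <= e)%N -> (j <= e)%N ->
  mulf (fz u z) (fz u z') \in (\sum_(k < (2 * e).+1) HomX R phi u k)%VS.
Proof.
move=> Xu /shellP[Xz Di] /shellP[Xz' Dj] ie je.
rewrite prod_fz //; apply: memv_suml => z3 Hz3.
apply: (subvP (HomX_sum _ _)); last first.
  move: Hz3; rewrite in_set => /andP[H _]. apply: (fz_HomX H).
have E := mxrank_sum_cap (u :&: z)%MS (u :&: z')%MS.
have L1 : (\rank (u :&: z + u :&: z') <= witt phi)%N.
  by rewrite -(rank_X Hnd Xu) mxrankS // addsmx_sub !capmxSl.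
have := dist_le Hnd z Xu; have := dist_le Hnd z' Xu.
rewrite !dpdistE in Di Dj.
move: E L1 Di Dj; move: (\rank (u :&: z + u :&: z')) (\rank (u :&: z :&: (u :&: z'))).
move: (\rank (u :&: z)) (\rank (u :&: z')) (witt phi) => a b d p q E L1 Di Dj Hb Ha.
apply: (natm (a := a) (b := b) _ (esym Di) (esym Dj)) => //.
by rewrite -E leq_add2r.
Qed.

Lemma lin_mul (g : fun_on) : linear (fun f => mulf f g).
Proof. move=> a f h; apply/ffunP => x; by rewrite !ffunE /= mulrDl scalerAl. Qed.

Lemma Lmul (g : fun_on) : {L : 'End(fun_on) | forall f, L f = mulf f g}.
Proof.
pose fL : {linear fun_on -> fun_on} :=
  HB.pack (fun f => mulf f g) (GRing.isLinear.Build _ _ _ _ (fun f => mulf f g) (lin_mul g)).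
by exists (linfun fL) => f; rewrite lfunE.
Qed.

Lemma H_ind u e (L : 'End(fun_on)) (W : {vspace fun_on}) :
  (forall j (z : 'M[F]_n), (j <= e)%N -> z \in shell phi u j -> L (fz u z) \in W) ->
  forall v, v \in (\sum_(j < e.+1) HomX R phi u j)%VS -> L v \in W.
Proof.
move=> H v Hv; rewrite memv_preim; apply: subvP Hv; apply/subv_sumP => j _.
apply/span_subvP => f /mapP[z Hz ->]; rewrite -memv_preim; apply: (H j z).
  by rewrite -ltnS ltn_ord.
by rewrite mem_enum in Hz.
Qed.

Lemma sq_in u e h h' : u \in dpX phi ->
  h \in (\sum_(j < e.+1) HomX R phi u j)%VS -> h' \in (\sum_(j < e.+1) HomX R phi u j)%VS ->
  mulf h h' \in (\sum_(k < (2 * e).+1) HomX R phi u k)%VS.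
Proof.
move=> Xu Hh Hh'.
have step1 : forall j z', (j <= e)%N -> z' \in shell phi u j ->
    forall v, v \in (\sum_(j < e.+1) HomX R phi u j)%VS ->
    mulf v (fz u z') \in (\sum_(k < (2 * e).+1) HomX R phi u k)%VS.
  move=> j z' je Hz' v Hv; have [L HL] := Lmul (fz u z').
  rewrite -HL; apply: (H_ind (e := e)) Hv => i z ie Hz; rewrite HL.
  exact: prod_in Hz Hz' ie je.
have [L HL] := Lmul h'; rewrite -HL; apply: (H_ind (e := e)) Hh => j z je Hz.
rewrite HL.
have -> : mulf (fz u z) h' = mulf h' (fz u z).
  by apply/ffunP => x; rewrite !ffunE mulrC.
exact: step1 je Hz _ Hh'.
Qed.

End Fun.

Section Final.
Variables (F : finFieldType) (n : nat) (R : realFieldType).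
Local Notation fun_on := (fun_on F n R).

Lemma lin_restr (S : {set 'M[F]_n}) : linear (fun f : fun_on => restr S f).
Proof.
move=> a f h; apply/ffunP => x; rewrite !ffunE /=.
by case: (x \in S); rewrite ?scaler0 ?addr0.
Qed.

Lemma Lrestr (S : {set 'M[F]_n}) : {L : 'End(fun_on) | forall f, L f = restr S f}.
Proof.
pose fL : {linear fun_on -> fun_on} :=
  HB.pack (fun f => restr S f) (GRing.isLinear.Build _ _ _ _ (fun f => restr S f) (lin_restr S)).
by exists (linfun fL) => f; rewrite lfunE.
Qed.

Definition delta (y : 'M[F]_n) : fun_on := [ffun x => if x == y then 1 else 0].

Lemma restr_span (Y : {set 'M[F]_n}) (f : fun_on) :
  restr Y f \in <<[seq delta y | y <- enum Y]>>%VS.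
Proof.
have -> : restr Y f = \sum_(y <- enum Y) f y *: delta y.
  apply/ffunP => x; rewrite ffunE sum_ffunE big_enum /=.
  case: (boolP (x \in Y)) => xY.
    rewrite (bigD1 x) //= big1 ?addr0 => [|y /andP[_ ne]]; rewrite !ffunE.
      by rewrite eqxx -[RHS]/(f x * 1) mulr1.
    by rewrite eq_sym (negbTE ne) -[LHS]/(f y * 0) mulr0.
  rewrite big1 // => y yY; rewrite !ffunE; case: eqP => [E|_]; last by rewrite -[LHS]/(f y * 0) mulr0.
  by move: xY; rewrite E yY.
rewrite big_seq; apply: memv_suml => y Hy; apply: memvZ; apply: memv_span.
exact: map_f.
Qed.

End Final.

Theorem theoremA6 (F : finFieldType) (n : nat) (phi : dpform F n)
  (R : realFieldType) (u0 : 'M[F]_n) (e : nat)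
  (Y : {set 'M[F]_n}) (w : 'M[F]_n -> R) :
  nondeg_form phi ->
  u0 \in dpX phi ->
  Y \subset dpX phi ->
  (forall y, y \in Y -> 0 < w y) ->
  (forall f : fun_on F n R,
     f \in (\sum_(j < (2 * e).+1) HomX R phi u0 j)%VS ->
     \sum_(r < (witt phi).+1 | [exists y in Y, dpdist phi u0 y == r])
        ((\sum_(y in Y | dpdist phi u0 y == r) w y) / #|shell phi u0 r|%:R)
          * \sum_(x in shell phi u0 r) f x
     = \sum_(y in Y) w y * f y) ->
  let S := [set x in dpX phi | [exists y in Y, dpdist phi u0 y == dpdist phi u0 x]] in
  (\dim (\sum_(j < e.+1) HomS R phi u0 S j)%VS <= #|Y|)%N.
Proof.
move=> Hnd Xu0 YX Hw Hdes; cbv zeta.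
set S := [set x in dpX phi | _].
set H := (\sum_(j < e.+1) HomX R phi u0 j)%VS.
set VS := (\sum_(j < e.+1) HomS R phi u0 S j)%VS.
have [rS HrS] := Lrestr R S; have [rY HrY] := Lrestr R Y.
have sub1 : (VS <= rS @: H)%VS.
  apply/subv_sumP => j _; apply/span_subvP => f /mapP[z Hz ->].
  rewrite -HrS; apply: memv_img.
  apply: (subvP (sumv_sup j (erefl true) (subvv _))).
  by apply: fz_HomX; rewrite mem_enum in Hz.
have YS : forall y, y \in Y -> y \in S.
  move=> y yY; rewrite /S in_set (subsetP YX y yY) /=.
  by apply/existsP; exists y; rewrite yY eqxx.
have ker0 : (VS :&: lker rY)%VS = 0%VS.
  apply/eqP; rewrite -subv0; apply/subvP => g; rewrite memv_cap memv_ker.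
  move=> /andP[gV /eqP gY]; rewrite memv0.
  have [h hH Eg] : exists2 h, h \in H & g = rS h.
    by apply/memv_imgP; exact: (subvP sub1).
  rewrite Eg in gY *.
  have hY : forall y, y \in Y -> h y = 0.
    move=> y yY; move: gY; rewrite HrY HrS => /(congr1 (fun f : fun_on F n R => f y)).
    by rewrite !ffunE yY YS.
  have := Hdes (mulf h h) (sq_in Hnd Xu0 hH hH).
  rewrite [X in _ = X]big1 => [E|y yY]; last by rewrite ffunE hY // mulr0 mulr0.
  have Hc : forall r : 'I_(witt phi).+1, [exists y in Y, dpdist phi u0 y == r] ->
      0 < (\sum_(y in Y | dpdist phi u0 y == r) w y) / #|shell phi u0 r|%:R.
    move=> r /existsP[y0 /andP[y0Y /eqP D0]]; apply: divr_gt0.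
      rewrite (bigD1 y0) /=; last by rewrite y0Y D0 eqxx.
      apply: (lt_le_trans (Hw _ y0Y)); rewrite lerDl.
      by apply: sumr_ge0 => y /andP[/andP[yY _] _]; exact: ltW (Hw _ yY).
    rewrite ltr0n; apply/card_gt0P; exists y0.
    by rewrite /shell in_set (subsetP YX _ y0Y) D0 eqxx.
  have Hs : forall r : 'I_(witt phi).+1, [exists y in Y, dpdist phi u0 y == r] ->
      \sum_(x in shell phi u0 r) mulf h h x = 0.
    move=> r Hr.
    have Hnn : forall r : 'I_(witt phi).+1, [exists y in Y, dpdist phi u0 y == r] ->
        0 <= (\sum_(y in Y | dpdist phi u0 y == r) w y) / #|shell phi u0 r|%:R *
             \sum_(x in shell phi u0 r) mulf h h x.
      move=> r' Hr'; apply: mulr_ge0; first exact: ltW (Hc r' Hr').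
      by apply: sumr_ge0 => x _; rewrite ffunE -expr2 sqr_ge0.
    move/eqP: (psumr_eq0P Hnn E Hr); rewrite mulf_eq0 (gt_eqF (Hc r Hr)) /=.
    by move/eqP.
  apply/eqP/ffunP => x; rewrite HrS !ffunE; case: ifP => // xS.
  move: xS; rewrite /S in_set => /andP[Xx /existsP[y0 /andP[y0Y /eqP D0]]].
  have lt : (dpdist phi u0 x < (witt phi).+1)%N by rewrite ltnS /dpdist leq_subr.
  have Hr : [exists y in Y, dpdist phi u0 y == Ordinal lt].
    by apply/existsP; exists y0; rewrite y0Y D0 /= eqxx.
  have Hnn2 : forall x, x \in shell phi u0 (Ordinal lt) -> 0 <= mulf h h x.
    by move=> x' _; rewrite ffunE -expr2 sqr_ge0.
  have Hx : x \in shell phi u0 (Ordinal lt) by rewrite /shell in_set Xx /= eqxx.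
  move: (psumr_eq0P Hnn2 (Hs _ Hr) Hx); rewrite ffunE => /eqP.
  by rewrite mulf_eq0 orbb => /eqP.
rewrite -(limg_dim_eq ker0).
have sub2 : (rY @: VS <= <<[seq delta R y | y <- enum Y]>>)%VS.
  by apply/subvP => v /memv_imgP[f _ ->]; rewrite HrY; exact: restr_span.
apply: leq_trans (dimvS sub2) _.
by apply: leq_trans (dim_span _) _; rewrite size_map -cardE.
Qed.
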